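(* Let $k$ be sufficiently large and $m/n\ge195\cdot2^k\ln^2k/k$. Let $\mathcal M$ be any outcome of the greedy mist construction applied to $\Phi=\Phi_k(n,m)$. Then with probability $1-\exp(-\Omega(n))$, $$|\mathcal D(\Phi,\mathcal M)|\le2^n\exp(-2n/k^2).$$
   Context: $\Phi=\Phi_k(n,m)$ is a uniformly random $k$-CNF with $m$ clauses over $x_1,\dots,x_n$. $\rho=2^{-k}m/n$, $\kappa=\ln k/k$. $\mathcal U_\Phi(\sigma)$ is the number of clauses unsatisfied by $\sigma$, $T(\Phi)=\{\tau:\mathcal U_\Phi(\tau)\le n\rho/10\}$. $\mathrm{dist}$ is Hamming distance and $\mathcal D_\sigma(r_1,r_2)=\{\tau\in\{0,1\}^n:\lfloor r_1\kappa n\rfloor\le\mathrm{dist}(\sigma,\tau)\le\lfloor r_2\kappa n\rfloor\}$. Greedy mist construction: start with $\mathcal M=\emptyset$; while $T(\Phi)\setminus\bigcup_{\mu\in\mathcal M}\mathcal D_\mu(0,2)\ne\emptyset$, add an arbitrary element of this set to $\mathcal M$. $\mathcal D(\Phi,\mathcal M)=\bigcup_{\sigma\in\mathcal M}\mathcal D_\sigma(0,10)$. *)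

(* Defs.v *)
From HB Require Import structures.
From Stdlib Require Import Reals Classical ClassicalEpsilon.
From mathcomp Require Import all_boot.

Set Implicit Arguments.
Unset Strict Implicit.
Unset Printing Implicit Defensive.

Definition assignment (n : nat) := {ffun 'I_n -> bool}.
(* A literal is (variable index, polarity); (i,true) = x_i, (i,false) = ~x_i.
   A k-clause is an ordered k-tuple of literals; Phi_k(n,m) is uniform over
   the (2n)^(k m) sequences of m such clauses. *)
Definition literal (n : nat) := ('I_n * bool)%type.
Definition clause (n k : nat) := {ffun 'I_k -> literal n}.
Definition formula (n k m : nat) := {ffun 'I_m -> clause n k}.

Definition lit_true (n : nat) (s : assignment n) (l : literal n) : bool :=
  s l.1 == l.2.
Definition clause_sat (n k : nat) (s : assignment n) (c : clause n k) : bool :=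
  [exists j : 'I_k, lit_true s (c j)].

Definition num_unsat (n k m : nat) (Phi : formula n k m) (s : assignment n) : nat :=
  #|[set j : 'I_m | ~~ clause_sat s (Phi j)]|.

Definition pbool (P : Prop) : bool :=
  if excluded_middle_informative P then true else false.

Local Open Scope R_scope.

Definition kappa (k : nat) : R := ln (INR k) / INR k.
Definition rho (n k m : nat) : R := INR m / (2 ^ k * INR n).

Definition inT (n k m : nat) (Phi : formula n k m) (t : assignment n) : Prop :=
  INR (num_unsat Phi t) <= INR n * rho n k m / 10.

Definition hdist (n : nat) (s t : assignment n) : nat :=
  #|[set i : 'I_n | s i != t i]|.

Definition inD (n k : nat) (s : assignment n) (r1 r2 : R) (t : assignment n) : Prop :=
  IZR (Int_part (r1 * kappa k * INR n)) <= INR (hdist s t) <=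
  IZR (Int_part (r2 * kappa k * INR n)).

Definition asg0 (n : nat) : assignment n := [ffun _ => false].

(* M = [:: mu_0; ...; mu_{t-1}] is a possible outcome of the greedy mist
   construction: each mu_i lies in T(Phi) minus the union of D_{mu_j}(0,2), j<i,
   and the loop stops, i.e. T(Phi) is covered by the union of D_mu(0,2). *)
Definition greedy_mist (n k m : nat) (Phi : formula n k m) (M : seq (assignment n)) : Prop :=
  (forall i : nat, (i < size M)%N ->
     inT Phi (nth (asg0 n) M i) /\
     (forall j : nat, (j < i)%N -> ~ inD k (nth (asg0 n) M j) 0 2 (nth (asg0 n) M i))) /\
  (forall t : assignment n, inT Phi t -> exists mu, mu \in M /\ inD k mu 0 2 t).

Definition mist_region_card (n k m : nat) (Phi : formula n k m) (M : seq (assignment n)) : nat :=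
  #|[set t : assignment n | pbool (exists mu, mu \in M /\ inD k mu 0 10 t)]|.

Definition bad_event (n k m : nat) (Phi : formula n k m) : Prop :=
  exists M, greedy_mist Phi M /\
    INR (mist_region_card Phi M) > 2 ^ n * exp (- 2 * INR n / (INR k) ^ 2).

Definition prob (n k m : nat) (P : formula n k m -> Prop) : R :=
  INR #|[set Phi : formula n k m | pbool (P Phi)]| / INR #|{: formula n k m}|.

(* Main.v *)
Require Import Defs.
From HB Require Import structures.
From Stdlib Require Import Reals Classical ClassicalEpsilon.
From mathcomp Require Import all_boot.
From Stdlib Require Import Lra.


Section Comb.
Local Open Scope nat_scope.

Lemma card_set_sum (T : finType) (P : pred T) : #|[set x | P x]| = \sum_x P x.
Proof.
rewrite -sum1_card big_mkcond /=; apply: eq_bigr => x _; rewrite inE; by case: (P x).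
Qed.

Lemma prod_bool (I : finType) (b : I -> bool) : \prod_i (b i : nat) = [forall i, b i].
Proof.
case: forallP => H.
  by rewrite big1 // => i _; rewrite H.
have [i Hi] : exists i, ~~ b i.
  apply/existsP; rewrite -negb_forall; apply/negP => /forallP; exact: H.
by rewrite (bigD1 i) //= (negbTE Hi) mul0n.
Qed.

Lemma sum_split_bool (T : finType) (b : T -> bool) :
  \sum_x (b x : nat) + \sum_x (~~ b x : nat) = #|T|.
Proof.
rewrite -big_split /= -sum1_card; apply: eq_bigr => x _; by case: (b x).
Qed.

Variables (n k m : nat).

Lemma false_lits (s : assignment n) : \sum_(l : literal n) (~~ lit_true s l : nat) = n.
Proof.
rewrite -(pair_big xpredT xpredT (fun i b => (~~ (s i == b) : nat))) /=.
rewrite -[n in RHS]card_ord -sum1_card; apply: eq_bigr => i _.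
by rewrite big_bool /=; case: (s i).
Qed.

Lemma unsat_clauses (s : assignment n) :
  \sum_(c : clause n k) (~~ clause_sat s c : nat) = n ^ k.
Proof.
have -> : \sum_(c : clause n k) (~~ clause_sat s c : nat) =
   \sum_(c : clause n k) \prod_j (~~ lit_true s (c j) : nat).
  apply: eq_bigr => c _; rewrite prod_bool /clause_sat negb_exists; by [].
rewrite -(bigA_distr_bigA (fun (j : 'I_k) l => (~~ lit_true s l : nat))) /=.
rewrite (eq_bigr (fun _ => n)); last by move=> j _; rewrite false_lits.
by rewrite prod_nat_const card_ord.
Qed.

Lemma card_clause : #|{: clause n k}| = (n * 2) ^ k.
Proof. by rewrite card_ffun card_prod card_ord card_bool card_ord. Qed.

Lemma clause_sum (s : assignment n) :
  \sum_(c : clause n k) 2 ^ (clause_sat s c : nat) + n ^ k = 2 * (n * 2) ^ k.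
Proof.
rewrite -(unsat_clauses s) -card_clause.
have -> : \sum_(c : clause n k) 2 ^ (clause_sat s c : nat) =
          \sum_(c : clause n k) 1 + \sum_(c : clause n k) (clause_sat s c : nat).
  rewrite -big_split /=; apply: eq_bigr => c _; by case: (clause_sat s c).
by rewrite -addnA sum_split_bool sum1_card mul2n addnn.
Qed.

Lemma formula_sum (s : assignment n) :
  \sum_(Phi : formula n k m) 2 ^ (m - num_unsat Phi s) =
  (\sum_(c : clause n k) 2 ^ (clause_sat s c : nat)) ^ m.
Proof.
have E : forall Phi : formula n k m,
    m - num_unsat Phi s = \sum_j (clause_sat s (Phi j) : nat).
  move=> Phi; rewrite /num_unsat card_set_sum.
  have := sum_split_bool _ (fun j => clause_sat s (Phi j))=> H; rewrite card_ord in H; rewrite -{1}H.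
  by rewrite addnK.
under eq_bigr => Phi _ do rewrite E expn_sum.
rewrite -(bigA_distr_bigA (fun (j : 'I_m) c => 2 ^ (clause_sat s c : nat))) /=.
by rewrite prod_nat_const card_ord.
Qed.

Lemma ball_sum (s : assignment n) :
  \sum_(t : assignment n) k ^ (n - hdist s t) = (k + 1) ^ n.
Proof.
have E : forall t : assignment n, n - hdist s t = \sum_i (s i == t i : nat).
  move=> t; rewrite /hdist card_set_sum.
  have := sum_split_bool _ (fun i => s i == t i)=> H; rewrite card_ord in H; rewrite -{1}H.
  by rewrite addnK.
under eq_bigr => t _ do rewrite E expn_sum.
rewrite -(bigA_distr_bigA (fun (i : 'I_n) b => k ^ (s i == b : nat))) /=.
rewrite (eq_bigr (fun _ => k + 1)); last first.
  by move=> i _; rewrite big_bool /=; case: (s i); rewrite /= expn1 expn0 // addnC.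
by rewrite prod_nat_const card_ord.
Qed.

End Comb.

Local Open Scope R_scope.

Lemma exp_le' x y : x <= y -> exp x <= exp y.
Proof.
intros H; destruct (Rle_lt_or_eq_dec _ _ H) as [h|h].
- left; apply exp_increasing; exact h.
- rewrite h; right; reflexivity.
Qed.

Lemma ln_le' x y : 0 < x -> x <= y -> ln x <= ln y.
Proof.
intros Hx H; destruct (Rle_lt_or_eq_dec _ _ H) as [h|h].
- left; apply ln_increasing; auto.
- rewrite h; right; reflexivity.
Qed.

Lemma pboolP (P : Prop) : pbool P = true <-> P.
Proof. unfold pbool; destruct (excluded_middle_informative P); split; auto; discriminate. Qed.

Lemma INR_addn a b : INR (a + b)%N = INR a + INR b.
Proof. exact: plus_INR. Qed.
Lemma INR_muln a b : INR (a * b)%N = INR a * INR b.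
Proof. exact: mult_INR. Qed.
Lemma INR_expn a d : INR (a ^ d)%N = INR a ^ d.
Proof. elim: d => [|d IH]; first by rewrite expn0 /=. by rewrite expnS INR_muln IH. Qed.

Lemma INR_expn_exp a d : (0 < a)%N -> INR (a ^ d)%N = exp (INR d * ln (INR a)).
Proof.
move=> Ha; rewrite INR_expn -Rpower_pow //. apply lt_0_INR; apply/ltP; exact Ha.
Qed.

Lemma sum_lb (T : finType) (A : pred T) (f : T -> nat) (Z : R) :
  (forall x, x \in A -> Z <= INR (f x)) -> INR #|A| * Z <= INR (\sum_(x in A) f x).
Proof.
move=> Hf; rewrite -sum1_card.
apply: (big_rec2 (fun y1 y2 => INR y1 * Z <= INR y2)); first by simpl; lra.
move=> i y1 y2 Hi H; rewrite !INR_addn; have := Hf i Hi; simpl; lra.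
Qed.

Lemma sum_ub (T : finType) (A : pred T) (f : T -> nat) (Z : R) :
  (forall x, x \in A -> INR (f x) <= Z) -> INR (\sum_(x in A) f x) <= INR #|A| * Z.
Proof.
move=> Hf; rewrite -sum1_card.
apply: (big_rec2 (fun y2 y1 => INR y1 <= INR y2 * Z)); first by simpl; lra.
move=> i y1 y2 Hi H; rewrite !INR_addn; have := Hf i Hi; simpl; lra.
Qed.

Lemma sum_sub (T : finType) (A : pred T) (f : T -> nat) :
  (\sum_(x in A) f x <= \sum_x f x)%N.
Proof. by rewrite [X in (_ <= X)%N](bigID (mem A)) /= leq_addr. Qed.

Lemma hdist_le n (s t : assignment n) : (hdist s t <= n)%N.
Proof. by rewrite /hdist -[X in (_ <= X)%N]card_ord max_card. Qed.

Lemma ball_bound (n k : nat) (s : assignment n) (Rb : R) : (0 < k)%N ->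
  INR #|[set t : assignment n | pbool (INR (hdist s t) <= Rb)]| *
     exp ((INR n - Rb) * ln (INR k)) <= exp (INR n * ln (INR k + 1)).
Proof.
move=> Hk.
have Hk' : 1 <= INR k by apply: (le_INR 1); apply/leP.
have lnk : 0 <= ln (INR k) by rewrite -ln_1; apply ln_le'; lra.
set A := [set t : assignment n | _].
apply Rle_trans with (INR (\sum_(t in A) k ^ (n - hdist s t))%N).
  apply: sum_lb => t; rewrite inE => /pboolP H.
  rewrite INR_expn_exp // minus_INR; last by apply/leP; exact: hdist_le.
  apply exp_le'; apply Rmult_le_compat_r; lra.
apply Rle_trans with (INR (\sum_t k ^ (n - hdist s t))%N).
  apply le_INR; apply/leP; exact: sum_sub.
rewrite ball_sum INR_expn_exp ?addn1 // S_INR; lra.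
Qed.

Lemma ln1p x : 0 < x -> ln (1 + x) <= x.
Proof.
move=> Hx; rewrite -{2}(ln_exp x); apply ln_le'; first lra; exact: exp_ineq1_le.
Qed.

Lemma ball_bound2 (n k : nat) (s : assignment n) (Rb : R) : (0 < k)%N ->
  INR #|[set t : assignment n | pbool (INR (hdist s t) <= Rb)]| <=
     exp (INR n / INR k + Rb * ln (INR k)).
Proof.
move=> Hk; have H := ball_bound n k s Rb Hk.
have Hk0 : 0 < INR k by apply lt_0_INR; apply/ltP.
have E : ln (INR k + 1) <= ln (INR k) + / INR k.
  replace (INR k + 1) with (INR k * (1 + / INR k)) by (field; lra).
  rewrite ln_mult; try lra. 2: have := Rinv_0_lt_compat _ Hk0; lra.
  have := ln1p (/ INR k) (Rinv_0_lt_compat _ Hk0); lra.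
have Hn : 0 <= INR n by apply pos_INR.
set c := INR #|_| in H *.
have Ep := exp_pos ((INR n - Rb) * ln (INR k)).
apply Rmult_le_reg_r with (exp ((INR n - Rb) * ln (INR k))); first lra.
apply Rle_trans with (1 := H); rewrite -exp_plus; apply exp_le'.
have : INR n * ln (INR k + 1) <= INR n * (ln (INR k) + / INR k)
  by apply Rmult_le_compat_l.
unfold Rdiv; lra.
Qed.

Local Open Scope R_scope.

Lemma exp_pow_nat x (m : nat) : exp x ^ m = exp (INR m * x).
Proof.
rewrite -Rpower_pow; last exact: exp_pos.
by rewrite /Rpower ln_exp.
Qed.

Lemma pow2_exp (m : nat) : 2 ^ m = exp (INR m * ln 2).
Proof. rewrite -Rpower_pow; [reflexivity|lra]. Qed.

Lemma num_unsat_le n k m (Phi : formula n k m) s : (num_unsat Phi s <= m)%N.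
Proof. by rewrite /num_unsat -[X in (_ <= X)%N]card_ord max_card. Qed.

Lemma T_count (n k m : nat) (s : assignment n) : (0 < n)%N ->
  INR #|[set Phi : formula n k m | pbool (inT Phi s)]| <=
  INR #|{: formula n k m}| * exp (- (INR m / 2 ^ k) * (/ 2 - ln 2 / 10)).
Proof.
move=> Hn.
have Hn' : 0 < INR n by apply lt_0_INR; apply/ltP.
have HP : 0 < 2 ^ k by apply pow_lt; lra.
set mu := INR m / 2 ^ k.
set A := [set Phi : formula n k m | _].
have L1 : INR #|A| * exp ((INR m - mu / 10) * ln 2) <=
          INR (\sum_(Phi in A) 2 ^ (m - num_unsat Phi s))%N.
  apply: sum_lb => Phi; rewrite inE => /pboolP H.
  rewrite INR_expn_exp // minus_INR; last by apply/leP; exact: num_unsat_le.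
  have -> : INR 2 = 2 by simpl; lra.
  apply exp_le'; apply Rmult_le_compat_r.
    by left; rewrite -ln_1; apply ln_increasing; lra.
  move: H; rewrite /inT /rho.
  have -> : INR n * (INR m / (2 ^ k * INR n)) / 10 = mu / 10.
    by rewrite /mu; field; lra.
  lra.
have L2 : INR (\sum_(Phi in A) 2 ^ (m - num_unsat Phi s))%N <=
          INR (\sum_(Phi : formula n k m) 2 ^ (m - num_unsat Phi s))%N.
  apply le_INR; apply/leP; exact: sum_sub.
rewrite formula_sum in L2.
have CS := clause_sum n k s.
set S := (\sum_(c : clause n k) _)%N in L2 CS.
have CS' : INR S + INR n ^ k = 2 * (2 ^ k * INR n ^ k).
  rewrite -INR_expn -INR_addn CS INR_muln INR_expn INR_muln INR_expn Rpow_mult_distr; have -> : INR 2 = 2 by simpl; lra. lra.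
have Hc : 0 < INR n ^ k by apply pow_lt.
set C := INR n ^ k in CS' Hc.
have HS : 0 <= INR S by apply pos_INR.
have L3 : INR S <= 2 * (2 ^ k) * C * exp (- / (2 * (2 ^ k))).
  have := exp_ineq1_le (- / (2 * (2 ^ k))).
  have : INR S = 2 * (2 ^ k) * C * (1 + - / (2 * (2 ^ k))) by rewrite -[INR S]Rplus_0_r; field_simplify; lra.
  move=> ->; move=> h; apply Rmult_le_compat_l; last exact h.
  nra.
have L4 : INR (S ^ m) <= ((2 ^ k) * C) ^ m * 2 ^ m * exp (- (mu / 2)).
  rewrite INR_expn; apply Rle_trans with ((2 * (2 ^ k) * C * exp (- / (2 * (2 ^ k)))) ^ m).
    apply pow_incr; lra.
  rewrite !Rpow_mult_distr exp_pow_nat.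
  have -> : INR m * - / (2 * (2 ^ k)) = - (mu / 2) by rewrite /mu; field; lra.
  right; ring.
have Hcard : INR #|{: formula n k m}| = ((2 ^ k) * C) ^ m.
  rewrite card_ffun card_clause card_ord INR_expn INR_expn INR_muln.
  have -> : INR 2 = 2 by simpl; lra. rewrite Rpow_mult_distr /C; f_equal; ring.
rewrite Hcard.
have E2 := pow2_exp m.
have H2 : 0 < 2 ^ m by apply pow_lt; lra.
have Hpc : 0 < ((2 ^ k) * C) ^ m by apply pow_lt; nra.
have key : INR #|A| * exp ((INR m - mu / 10) * ln 2) <= ((2 ^ k) * C) ^ m * 2 ^ m * exp (- (mu / 2)) by lra.
have E3 : exp ((INR m - mu / 10) * ln 2) = 2 ^ m * exp (mu / 10 * ln 2 * -1).
  rewrite E2 -exp_plus; f_equal; ring.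
rewrite E3 in key.
have E4 : exp (- (mu / 2)) = exp (- mu * (/ 2 - ln 2 / 10)) * exp (mu / 10 * ln 2 * -1).
  rewrite -exp_plus; f_equal; field.
rewrite E4 in key.
have Hx := exp_pos (mu / 10 * ln 2 * -1).
apply Rmult_le_reg_r with (2 ^ m * exp (mu / 10 * ln 2 * -1)); first nra.
nra.
Qed.

Local Open Scope R_scope.
Set Implicit Arguments.

Lemma union_le (T U : finType) (A : pred U) (P : U -> T -> bool) (X : pred T) :
  (forall t, X t -> exists2 u, u \in A & P u t) ->
  (#|[set t | X t]| <= \sum_(u in A) #|[set t | P u t]|)%N.
Proof.
move=> H.
rewrite (eq_bigr (fun u => \sum_t (P u t : nat))); last by move=> u _; rewrite card_set_sum.
rewrite exchange_big /= card_set_sum; apply: leq_sum => t _.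
case Ht: (X t) => //.
have [u Hu Pu] := H t Ht.
by rewrite (bigD1 u) //= Pu.
Qed.

Lemma sum_ubT (T : finType) (f : T -> nat) (Z : R) :
  (forall x, INR (f x) <= Z) -> INR (\sum_x f x) <= INR #|T| * Z.
Proof.
move=> Hf; rewrite -sum1_card.
apply: (big_rec2 (fun y2 y1 => INR y1 <= INR y2 * Z)); first by simpl; lra.
move=> i y1 y2 _ H; rewrite !INR_addn; have := Hf i; simpl; lra.
Qed.

Lemma double_count n k m :
  (\sum_(Phi : formula n k m) #|[set s : assignment n | pbool (inT Phi s)]| =
   \sum_(s : assignment n) #|[set Phi : formula n k m | pbool (inT Phi s)]|)%N.
Proof.
under eq_bigr => Phi _ do rewrite card_set_sum.
rewrite exchange_big /=; apply: eq_bigr => s _; by rewrite card_set_sum.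
Qed.

Definition Rb (n k : nat) : R := IZR (Int_part (10 * kappa k * INR n)).
Definition ball n k (mu : assignment n) : {set assignment n} :=
  [set t | pbool (INR (hdist mu t) <= Rb n k)].
Definition Tset n k m (Phi : formula n k m) : {set assignment n} :=
  [set s | pbool (inT Phi s)].

Lemma mist_le n k m (Phi : formula n k m) M :
  greedy_mist Phi M ->
  (mist_region_card Phi M <=
   \sum_(mu in Tset Phi) #|ball k mu|)%N.
Proof.
move=> [G1 _]; rewrite /mist_region_card.
apply: union_le => t /pboolP [mu [HM HD]].
exists mu.
  rewrite inE; apply/pboolP.
  have [i Hi <-] := nthP (asg0 n) HM.
  by case: (G1 i Hi).
by apply/pboolP; case: HD.
Qed.

Local Open Scope R_scope.

Lemma exponent_ineq (K l L2 mu n Rbv : R) :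
  3 <= K -> 1 <= l -> L2 <= 1 -> 0 <= n ->
  mu >= 195 * (l ^ 2 / K * n) -> Rbv <= 10 * (l / K) * n ->
  - mu * (/ 2 - L2 / 10) + (n / K + Rbv * l) <= - 2 * n / K ^ 2 + - / K * n.
Proof.
move=> HK Hl HL Hn Hmu HR.
have Kp : 0 < K by lra.
set q := l ^ 2 / K * n.
have q1 : n / K <= q.
  rewrite /q; have : 1 <= l ^ 2 by nra.
  move=> h; unfold Rdiv; have : 0 <= n * / K by apply Rmult_le_pos; [lra| left; apply Rinv_0_lt_compat; lra].
  move=> h2; nra.
have q2 : 2 * n / K ^ 2 <= n / K.
  have -> : 2 * n / K ^ 2 = (n / K) * (2 / K) by field; lra.
  have : 0 <= n / K by apply Rmult_le_pos; [lra| left; apply Rinv_0_lt_compat; lra].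
  have : 2 / K <= 1 by apply (Rmult_le_reg_r K); [lra| field_simplify; lra].
  nra.
have q3 : Rbv * l <= 10 * q.
  have -> : 10 * q = 10 * (l / K) * n * l by rewrite /q; field; lra.
  apply Rmult_le_compat_r; lra.
have q0 : 0 <= q by rewrite /q; apply Rmult_le_pos; [apply Rmult_le_pos; [nra| left; apply Rinv_0_lt_compat; lra] | lra].
have mu0 : 0 <= mu by fold q in Hmu; lra.
have q4 : mu * (/ 2 - L2 / 10) >= 78 * q by fold q in Hmu; nra.
have -> : - 2 * n / K ^ 2 = - (2 * n / K ^ 2) by field; lra.
have -> : - / K * n = - (n / K) by field; lra.
have -> : - mu * (/ 2 - L2 / 10) = - (mu * (/ 2 - L2 / 10)) by ring.
lra.
Qed.

Theorem mainTheorem8 :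
  exists k0 : nat, forall k : nat, (k0 <= k)%nat ->
  forall mseq : nat -> nat,
    (forall n : nat,
       INR (mseq n) >= 195 * 2 ^ k * (ln (INR k)) ^ 2 / INR k * INR n) ->
  exists c : R, c > 0 /\ exists n0 : nat, forall n : nat, (n0 <= n)%nat ->
    prob (fun Phi : formula n k (mseq n) => bad_event Phi) <= exp (- c * INR n).
Proof.
exists 3%N => k Hk mseq Hm.
have K3 : 3 <= INR k by have := le_INR 3 k (elimT leP Hk); simpl; lra.
have Kpos : (0 < k)%N by apply: leq_trans Hk.
have Kp : 0 < INR k by lra.
exists (/ INR k); split; first by apply Rinv_0_lt_compat.
exists 1%N => n Hn.
have Hm' := Hm n.
set m := mseq n in Hm' *.
set F := INR #|{: formula n k m}|.
set Y := exp (- (INR m / 2 ^ k) * (/ 2 - ln 2 / 10)).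
set Bb := exp (INR n / INR k + Rb n k * ln (INR k)).
set E2 := exp (- 2 * INR n / INR k ^ 2).
set X := 2 ^ n * E2.
have Bp : 0 < Bb by apply exp_pos.
have E2p : 0 < E2 by apply exp_pos.
have P2 : 0 < 2 ^ n by apply pow_lt; lra.
have Fp : 0 < F.
  rewrite /F card_ffun card_clause card_ord INR_expn INR_expn INR_muln.
  apply pow_lt; apply pow_lt; apply Rmult_lt_0_compat; last by simpl; lra.
  by apply lt_0_INR; apply/ltP.
have HB : forall mu : assignment n, INR #|ball k mu| <= Bb.
  by move=> mu; apply: ball_bound2.
have Hbad : forall Phi : formula n k m, bad_event Phi -> X / Bb <= INR #|Tset Phi|.
  move=> Phi [M [G HX]].
  have h1 := le_INR _ _ (elimT leP (mist_le G)).
  have h2 : INR (\sum_(mu in Tset Phi) #|ball k mu|) <= INR #|Tset Phi| * Bb.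
    by apply: sum_ub => mu _; apply: HB.
  apply (Rmult_le_reg_r Bb) => //.
  have -> : X / Bb * Bb = X by field; lra.
  rewrite /X /E2; lra.
set Bad := [set Phi : formula n k m | pbool (bad_event Phi)].
have S1 : INR #|Bad| * (X / Bb) <= INR (\sum_(Phi in Bad) #|Tset Phi|).
  apply: sum_lb => Phi; rewrite inE => /pboolP; exact: Hbad.
have S2 : INR (\sum_(Phi in Bad) #|Tset Phi|) <= INR (\sum_(Phi : formula n k m) #|Tset Phi|).
  apply le_INR; apply/leP; exact: sum_sub.
rewrite /Tset double_count in S2. rewrite /Tset in S1.
have S3 : INR (\sum_s #|[set Phi : formula n k m | pbool (inT Phi s)]|) <=
          INR #|{: assignment n}| * (F * Y).
  apply: sum_ubT => s; exact: T_count.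
have Ca : INR #|{: assignment n}| = 2 ^ n.
  by rewrite card_ffun card_bool card_ord INR_expn.
rewrite Ca in S3.
have Hexp : Y * Bb <= E2 * exp (- / INR k * INR n).
  rewrite /Y /Bb /E2 -!exp_plus; apply exp_le'.
  apply: exponent_ineq => //.
  - rewrite -(ln_exp 1); apply ln_le'; [apply exp_pos | have := exp_le_3; lra].
  - rewrite -(ln_exp 1); apply ln_le'; first lra.
    have := exp_ineq1_le 1; lra.
  - apply pos_INR.
    have Pk : 0 < 2 ^ k by apply pow_lt; lra.
    apply Rle_ge; apply (Rmult_le_reg_r (2 ^ k)) => //.
    have -> : INR m / 2 ^ k * 2 ^ k = INR m by field; lra.
    apply Rge_le in Hm'; apply: Rle_trans Hm'; right; field; lra.
  - rewrite /Rb /kappa; have [h _] := base_Int_part (10 * (ln (INR k) / INR k) * INR n).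
    exact h.
set a := INR #|Bad| in S1.
have Ha : a * E2 <= F * Y * Bb.
  have S : a * (X / Bb) <= 2 ^ n * (F * Y) := Rle_trans _ _ _ S1 (Rle_trans _ _ _ S2 S3).
  have h := Rmult_le_compat_r (Bb / 2 ^ n) _ _ (ltac:(left; apply Rdiv_lt_0_compat; lra)) S.
  have e1 : a * (X / Bb) * (Bb / 2 ^ n) = a * E2 by rewrite /X; field; lra.
  have e2 : 2 ^ n * (F * Y) * (Bb / 2 ^ n) = F * Y * Bb by field; lra.
  lra.
rewrite /prob -/Bad -/a -/F.
have ec := exp_pos (- / INR k * INR n).
apply (Rmult_le_reg_r F) => //.
have -> : a / F * F = a by field; lra.
apply (Rmult_le_reg_r E2) => //.
have : F * (Y * Bb) <= F * (E2 * exp (- / INR k * INR n)) by apply Rmult_le_compat_l; lra.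
lra.
Qed.
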